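(* Let $N,S,d\ge 1$, $\alpha\in(0,1)$, let $\overline{C}_1,\dots,\overline{C}_S\in\mathbb{R}^{N\times N}$ be symmetric, $\overline{A}_1,\dots,\overline{A}_S\in\mathbb{R}^{N\times d}$, and $h\in\Sigma_N$, with $D_h=\mathrm{diag}(h)$. For $w\in\Sigma_S$ set $\widetilde{C}(w) = \sum_s w_s\overline{C}_s$ and $\widetilde{A}(w)=\sum_s w_s\overline{A}_s$. Define $M_1,M_2\in\mathbb{R}^{S\times S}$ by $(M_1)_{pq} = \langle D_h\overline{C}_p, \overline{C}_q D_h\rangle_F$ and $(M_2)_{pq} = \langle D_h^{1/2}\overline{A}_p, D_h^{1/2}\overline{A}_q\rangle_F$. Then $M_1$, $M_2$ and $M_\alpha := \alpha M_1 + (1-\alpha)M_2$ are positive semi-definite, hence $\|x\|_{M_\alpha}=\sqrt{x^\top M_\alpha x}$ induces a Mahalanobis (pseudo-)distance on $\mathbb{R}^S$, and for all $w^{(1)},w^{(2)}\in\Sigma_S$, $$FGW_{2,\alpha}\big(\widetilde{C}(w^{(1)}),\widetilde{A}(w^{(1)}),\widetilde{C}(w^{(2)}),\widetilde{A}(w^{(2)}),h,h\big)\le \|w^{(1)}-w^{(2)}\|_{M_\alpha}.$$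
   Context: $\Sigma_N = \{h \in \mathbb{R}_+^N : \sum_i h_i = 1\}$; $\mathcal{U}(h,h)=\{T\in\mathbb{R}_+^{N\times N}: T\mathbf{1}_N=h,\ T^\top\mathbf{1}_N=h\}$. For symmetric $C^X,C^Y\in\mathbb{R}^{N\times N}$ and feature matrices $A^X,A^Y\in\mathbb{R}^{N\times d}$ with rows $a^X_i,a^Y_j$, the Fused Gromov–Wasserstein distance with squared Euclidean feature cost is $FGW_{2,\alpha}(C^X,A^X,C^Y,A^Y,h,h) = \big(\min_{T\in\mathcal{U}(h,h)} (1-\alpha)\sum_{i,j}\|a^X_i-a^Y_j\|_2^2T_{ij} + \alpha\sum_{i,j,k,l}(C^X_{ij}-C^Y_{kl})^2T_{ik}T_{jl}\big)^{1/2}$. $\langle A,B\rangle_F=\mathrm{tr}(A^\top B)$. *)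

(* Defs.v *)
From HB Require Import structures.
From mathcomp Require Import all_boot all_order all_algebra.
From mathcomp Require Import classical_sets reals.
Set Implicit Arguments. Unset Strict Implicit. Unset Printing Implicit Defensive.
Import Order.TTheory GRing.Theory Num.Theory.
Local Open Scope ring_scope.
Local Open Scope classical_set_scope.

Definition simplex (R : realType) (n : nat) : set 'cV[R]_n :=
  [set h : 'cV[R]_n | (forall i, 0 <= h i 0) /\ \sum_(i < n) h i 0 = 1].

Definition Dh (R : realType) (n : nat) (h : 'cV[R]_n) : 'M[R]_n := diag_mx h^T.
Definition Dh_sqrt (R : realType) (n : nat) (h : 'cV[R]_n) : 'M[R]_n :=
  diag_mx (\row_i Num.sqrt (h i 0)).

Definition frob (R : realType) (m n : nat) (A B : 'M[R]_(m, n)) : R := \tr (A^T *m B).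

Definition couplings (R : realType) (n : nat) (h : 'cV[R]_n) : set 'M[R]_n :=
  [set T : 'M[R]_n | (forall i j, 0 <= T i j) /\ T *m const_mx 1 = h /\ T^T *m const_mx 1 = h].

Definition fgw_cost (R : realType) (N d : nat) (alpha : R)
    (CX : 'M[R]_N) (AX : 'M[R]_(N, d)) (CY : 'M[R]_N) (AY : 'M[R]_(N, d))
    (T : 'M[R]_N) : R :=
  (1 - alpha) * \sum_(i < N) \sum_(j < N)
      ((\sum_(k < d) (AX i k - AY j k) ^+ 2) * T i j)
  + alpha * \sum_(i < N) \sum_(j < N) \sum_(k < N) \sum_(l < N)
      ((CX i j - CY k l) ^+ 2 * T i k * T j l).

(* FGW_{2,alpha} = (min over U(h,h) of the objective)^{1/2}; the minimum is
   written as an infimum (it is attained, U(h,h) being compact). *)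
Definition FGW2 (R : realType) (N d : nat) (alpha : R)
    (CX : 'M[R]_N) (AX : 'M[R]_(N, d)) (CY : 'M[R]_N) (AY : 'M[R]_(N, d))
    (h : 'cV[R]_N) : R :=
  Num.sqrt (inf [set fgw_cost alpha CX AX CY AY T | T in couplings h]).

Definition psd (R : realType) (n : nat) (M : 'M[R]_n) : Prop :=
  M^T = M /\ forall x : 'cV[R]_n, 0 <= (x^T *m M *m x) 0 0.

Definition mnorm (R : realType) (n : nat) (M : 'M[R]_n) (x : 'cV[R]_n) : R :=
  Num.sqrt ((x^T *m M *m x) 0 0).

Definition M1 (R : realType) (N S : nat) (Cb : 'I_S -> 'M[R]_N) (h : 'cV[R]_N)
  : 'M[R]_S := \matrix_(p, q) frob (Dh h *m Cb p) (Cb q *m Dh h).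

Definition M2 (R : realType) (N S d : nat) (Ab : 'I_S -> 'M[R]_(N, d))
  (h : 'cV[R]_N) : 'M[R]_S :=
  \matrix_(p, q) frob (Dh_sqrt h *m Ab p) (Dh_sqrt h *m Ab q).

Definition wsum (R : realType) (S m n : nat) (X : 'I_S -> 'M[R]_(m, n))
  (w : 'cV[R]_S) : 'M[R]_(m, n) := \sum_(s < S) w s 0 *: X s.

(* Main.v *)
Require Import Defs.
From HB Require Import structures.
From mathcomp Require Import all_boot all_order all_algebra.
From mathcomp Require Import classical_sets reals.
From mathcomp Require Import ring lra.
Import Order.TTheory GRing.Theory Num.Theory.
Local Open Scope ring_scope.
Local Open Scope classical_set_scope.

Section Helpers.
Variable R : realType.

Lemma sum_delta n (F : 'I_n -> R) i : \sum_j F j *+ (i == j) = F i.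
Proof.
rewrite (bigD1 i) //= eqxx mulr1n big1 ?addr0 // => j /negbTE.
by rewrite eq_sym => ->; rewrite mulr0n.
Qed.

Lemma DhE n (h : 'cV[R]_n) i j : Dh h i j = h i 0 *+ (i == j).
Proof. by rewrite /Dh !mxE. Qed.

Lemma qfE n (M : 'M[R]_n) (x : 'cV[R]_n) :
  (x^T *m M *m x) 0 0 = \sum_p \sum_q x p 0 * M p q * x q 0.
Proof.
rewrite mxE exchange_big; apply: eq_bigr => q _; rewrite mxE mulr_suml.
by apply: eq_bigr => p _; rewrite !mxE.
Qed.

Lemma quadE (A : finType) n (c : A -> R) (f : A -> 'I_n -> R) (x : 'cV[R]_n) :
  \sum_p \sum_q x p 0 * (\sum_a c a * (f a p * f a q)) * x q 0
  = \sum_a c a * (\sum_p x p 0 * f a p) ^+ 2.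
Proof.
transitivity (\sum_p \sum_q \sum_a c a * ((x p 0 * f a p) * (x q 0 * f a q))).
  apply: eq_bigr => p _; apply: eq_bigr => q _.
  rewrite mulr_sumr mulr_suml; apply: eq_bigr => a _; ring.
transitivity (\sum_p \sum_a \sum_q c a * ((x p 0 * f a p) * (x q 0 * f a q))).
  by apply: eq_bigr => p _; rewrite exchange_big.
rewrite exchange_big; apply: eq_bigr => a _.
rewrite expr2 mulr_suml mulr_sumr; apply: eq_bigr => p _.
by rewrite !mulr_sumr; apply: eq_bigr => q _.
Qed.

Lemma psd_of (A : finType) n (c : A -> R) (f : A -> 'I_n -> R) (M : 'M[R]_n) :
  (forall a, 0 <= c a) ->
  (forall p q, M p q = \sum_a c a * (f a p * f a q)) -> psd M.
Proof.
move=> c0 ME; split.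
  apply/matrixP => p q; rewrite mxE !ME; apply: eq_bigr => a _; by rewrite (mulrC (f a q)).
move=> x; rewrite qfE.
under eq_bigr => p _ do under eq_bigr => q _ do rewrite ME.
by rewrite quadE; apply: sumr_ge0 => a _; apply: mulr_ge0 => //; apply: sqr_ge0.
Qed.

Lemma M1E N S (Cb : 'I_S -> 'M[R]_N) (h : 'cV[R]_N) p q :
  M1 Cb h p q = \sum_(a : 'I_N * 'I_N) (h a.2 0 * h a.1 0) * (Cb p a.2 a.1 * Cb q a.2 a.1).
Proof.
rewrite /M1 mxE /frob /mxtrace -(pair_bigA _ (fun i j => (h j 0 * h i 0) * (Cb p j i * Cb q j i))) /=; apply: eq_bigr => i _.
rewrite mxE; apply: eq_bigr => j _; rewrite !mxE.
have -> : \sum_k Dh h j k * Cb p k i = h j 0 * Cb p j i.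
  under eq_bigr => k _ do rewrite DhE mulrnAl.
  by rewrite sum_delta.
have -> : \sum_k Cb q j k * Dh h k i = Cb q j i * h i 0.
  under eq_bigr => k _ do rewrite DhE mulrnAr eq_sym.
  by rewrite sum_delta.
ring.
Qed.

Lemma M2E N S d (Ab : 'I_S -> 'M[R]_(N, d)) (h : 'cV[R]_N) p q :
  (forall i, 0 <= h i 0) ->
  M2 Ab h p q = \sum_(a : 'I_d * 'I_N) h a.2 0 * (Ab p a.2 a.1 * Ab q a.2 a.1).
Proof.
move=> h0; rewrite /M2 mxE /frob /mxtrace -(pair_bigA _ (fun k i => h i 0 * (Ab p i k * Ab q i k))) /=; apply: eq_bigr => k _.
rewrite mxE; apply: eq_bigr => i _; rewrite !mxE.
have E : forall (B : 'M[R]_(N, d)), \sum_j Dh_sqrt h i j * B j k = Num.sqrt (h i 0) * B i k.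
  move=> B; under eq_bigr => j _ do rewrite /Dh_sqrt mxE mxE mulrnAl.
  by rewrite sum_delta.
rewrite !E [in RHS](_ : h i 0 = Num.sqrt (h i 0) ^+ 2); first ring.
by rewrite sqr_sqrtr.
Qed.

Lemma wsumE S m n (X : 'I_S -> 'M[R]_(m, n)) (w : 'cV[R]_S) i j :
  wsum X w i j = \sum_s w s 0 * X s i j.
Proof. by rewrite /wsum summxE; apply: eq_bigr => s _; rewrite mxE. Qed.

Lemma wsumB S m n (X : 'I_S -> 'M[R]_(m, n)) (w1 w2 : 'cV[R]_S) i j :
  wsum X w1 i j - wsum X w2 i j = \sum_s (w1 - w2) s 0 * X s i j.
Proof.
rewrite !wsumE -sumrB; apply: eq_bigr => s _; rewrite !mxE; ring.
Qed.

Lemma cost_diag N d (alpha : R) (CX : 'M[R]_N) (AX : 'M[R]_(N, d)) CY AY (h : 'cV[R]_N) :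
  fgw_cost alpha CX AX CY AY (Dh h) =
  (1 - alpha) * \sum_k \sum_i h i 0 * (AX i k - AY i k) ^+ 2
  + alpha * \sum_i \sum_j (h i 0 * h j 0) * (CX i j - CY i j) ^+ 2.
Proof.
rewrite /fgw_cost; congr (_ * _ + _ * _).
  transitivity (\sum_i (\sum_k (AX i k - AY i k) ^+ 2) * h i 0).
    apply: eq_bigr => i _.
    transitivity (\sum_j ((\sum_k (AX i k - AY j k) ^+ 2) * h i 0) *+ (i == j)).
      by apply: eq_bigr => j _; rewrite DhE mulrnAr.
    by rewrite sum_delta.
  rewrite [RHS]exchange_big; apply: eq_bigr => i _; rewrite mulr_suml.
  by apply: eq_bigr => k _; rewrite mulrC.
apply: eq_bigr => i _; apply: eq_bigr => j _.
transitivity (\sum_k (\sum_l (((CX i j - CY k l) ^+ 2 * h i 0 * h j 0) *+ (j == l))) *+ (i == k)).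
  apply: eq_bigr => k _; rewrite -sumrMnl; apply: eq_bigr => l _; rewrite !DhE.
  by case: (i == k); case: (j == l); rewrite /= ?mulr0n ?mulr1n ?mulr0 ?mul0r.
rewrite sum_delta sum_delta; ring.
Qed.

End Helpers.

Theorem proposition4 (R : realType) (N S d : nat) (alpha : R)
  (Cb : 'I_S -> 'M[R]_N) (Ab : 'I_S -> 'M[R]_(N, d)) (h : 'cV[R]_N) :
  (0 < N)%N -> (0 < S)%N -> (0 < d)%N ->
  0 < alpha < 1 ->
  (forall s, (Cb s)^T = Cb s) ->
  h \in @simplex R N ->
  let Ma := alpha *: M1 Cb h + (1 - alpha) *: M2 Ab h in
  [/\ psd (M1 Cb h), psd (M2 Ab h), psd Ma &
   forall w1 w2 : 'cV[R]_S, w1 \in @simplex R S -> w2 \in @simplex R S ->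
     FGW2 alpha (wsum Cb w1) (wsum Ab w1) (wsum Cb w2) (wsum Ab w2) h
       <= mnorm Ma (w1 - w2)].
Proof.
move=> _ _ _ /andP[a0 a1] _ hin Ma; move: hin; rewrite in_setE => -[h0 hs].
have P1 : psd (M1 Cb h).
  apply: (@psd_of R _ _ (fun a : 'I_N * 'I_N => h a.2 0 * h a.1 0)
                 (fun a p => Cb p a.2 a.1)).
    by move=> a; apply: mulr_ge0.
  exact: M1E.
have P2 : psd (M2 Ab h).
  apply: (@psd_of R _ _ (fun a : 'I_d * 'I_N => h a.2 0)
                 (fun a p => Ab p a.2 a.1)) => //.
  by move=> p q; apply: M2E.
have qfMa : forall x : 'cV[R]_S, (x^T *m Ma *m x) 0 0 = alpha * (x^T *m M1 Cb h *m x) 0 0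
                               + (1 - alpha) * (x^T *m M2 Ab h *m x) 0 0.
  move=> x; rewrite /Ma mulmxDr mulmxDl -!scalemxAr -!scalemxAl.
  by rewrite [LHS]mxE [X in X + _]mxE [X in _ + X]mxE.
have PMa : psd Ma.
  split.
    by rewrite /Ma linearD /= !linearZ /= P1.1 P2.1.
  move=> x; rewrite qfMa; apply: addr_ge0; apply: mulr_ge0.
  - exact: ltW.
  - exact: P1.2.
  - by rewrite subr_ge0 ltW.
  - exact: P2.2.
split => // w1 w2 _ _.
set x := w1 - w2.
rewrite /FGW2 /mnorm; apply: ler_wsqrtr.
have rowT : Dh h *m const_mx 1 = h.
  apply/matrixP => i j; rewrite !mxE (ord1 j).
  transitivity (\sum_k h i 0 *+ (i == k)).
    by apply: eq_bigr => k _; rewrite DhE mxE mulr1.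
  by rewrite sum_delta.
have cT0 : couplings h (Dh h).
  split; [move=> i j; rewrite DhE; case: (i == j); rewrite ?mulr0n ?mulr1n // | split => //].
  by rewrite /Dh tr_diag_mx.
have cost_eq : fgw_cost alpha (wsum Cb w1) (wsum Ab w1) (wsum Cb w2) (wsum Ab w2) (Dh h)
   = (x^T *m Ma *m x) 0 0.
  have E1 : \sum_p \sum_q x p 0 * M1 Cb h p q * x q 0
      = \sum_i \sum_j h i 0 * h j 0 * (\sum_p x p 0 * Cb p i j) ^+ 2.
    under eq_bigr => p _ do under eq_bigr => q _ do rewrite M1E.
    rewrite quadE.
    rewrite -(pair_bigA _ (fun i j => h j 0 * h i 0 * (\sum_p x p 0 * Cb p j i) ^+ 2)) /=.
    rewrite [RHS]exchange_big; apply: eq_bigr => i _; apply: eq_bigr => j _.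
    by rewrite (mulrC (h j 0)).
  have E2 : \sum_p \sum_q x p 0 * M2 Ab h p q * x q 0
      = \sum_k \sum_i h i 0 * (\sum_p x p 0 * Ab p i k) ^+ 2.
    under eq_bigr => p _ do under eq_bigr => q _ do rewrite (@M2E _ _ _ _ _ _ _ _ h0).
    rewrite quadE.
    by rewrite -(pair_bigA _ (fun k i => h i 0 * (\sum_p x p 0 * Ab p i k) ^+ 2)) /=.
  rewrite cost_diag qfMa !qfE E1 E2 addrC; congr (_ * _ + _ * _).
    by apply: eq_bigr => k _; apply: eq_bigr => i _; rewrite wsumB.
  by apply: eq_bigr => i _; apply: eq_bigr => j _; rewrite wsumB.
rewrite -cost_eq; apply: ge_inf; last by exists (Dh h).
exists 0 => y [T [Tge0 _] <-].
rewrite /fgw_cost; apply: addr_ge0; apply: mulr_ge0.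
- by rewrite subr_ge0 ltW.
- apply: sumr_ge0 => i _; apply: sumr_ge0 => j _; apply: mulr_ge0 => //.
  by apply: sumr_ge0 => k _; apply: sqr_ge0.
- exact: ltW.
- do 4! (apply: sumr_ge0 => ? _); apply: mulr_ge0; last exact: Tge0.
  by apply: mulr_ge0; [apply: sqr_ge0 | apply: Tge0].
Qed.
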